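(* Let $f:\mathbb{N}^k\to\mathbb{N}$ ($k\ge1$) be minimal. Then $f$ is bad.
   Context: $\mathbb{N}=\{0,1,2,\dots\}$. For $A\subseteq\mathbb{N}$, $\bar d(A)=\limsup_{n\to\infty}\frac{|A\cap[0,n)|}{n}$. $\mathscr{C}_{I_{\bar d=0}}$ is the set of all finitary functions $f:\mathbb{N}^k\to\mathbb{N}$ ($k\ge1$) such that $\bar d(f[A^k])=0$ whenever $\bar d(A)=0$. For $f:\mathbb{N}^k\to\mathbb{N}$, a permutation $\pi$ of $\{1,\dots,k\}$ and $\bar a=(a_1,\dots,a_\ell)\in\mathbb{N}^\ell$ with $0\le\ell<k$, the shadow $f_{\pi,\bar a}$ is the $(k-\ell)$-ary function $(y_1,\dots,y_{k-\ell})\mapsto f_\pi(a_1,\dots,a_\ell,y_1,\dots,y_{k-\ell})$, where $f_\pi(x_1,\dots,x_k)=f(x_{\pi(1)},\dots,x_{\pi(k)})$; it is proper if $\ell>0$. $f$ is minimal if $f\notin\mathscr{C}_{I_{\bar d=0}}$ and every proper shadow of $f$ lies in $\mathscr{C}_{I_{\bar d=0}}$. $f$ is bad if there exists a rational $\varepsilon>0$ such that for every $i\in\mathbb{N}$ there are $n,t\ge i$ and $A\subseteq[i,n)$ with $|A\cap[0,r)|\le\frac{r}{2^i}$ for all $r\in\mathbb{N}$ and $|f[A^k]\cap[0,t)|\ge\varepsilon t$. *)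

(* Defs.v *)
From HB Require Import structures.
From mathcomp Require Import all_boot all_order all_algebra all_fingroup.
From mathcomp Require Import all_classical all_reals all_analysis.
From mathcomp Require Import Rstruct.
Set Implicit Arguments. Unset Strict Implicit. Unset Printing Implicit Defensive.
Import Order.TTheory GRing.Theory Num.Theory.
Local Open Scope classical_set_scope.
Local Open Scope ring_scope.

Definition cnt (A : set nat) (n : nat) : nat := (\sum_(0 <= i < n) (i \in A : nat))%N.

Definition dbar (A : set nat) : \bar Rdefinitions.R :=
  limn_esup (fun n => ((cnt A n)%:R / n%:R : Rdefinitions.R)%:E).

Definition fimage (k : nat) (f : ('I_k -> nat) -> nat) (A : set nat) : set nat :=
  [set y | exists x : 'I_k -> nat, (forall j, A (x j)) /\ f x = y].

Definition inC (k : nat) (f : ('I_k -> nat) -> nat) : Prop :=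
  (0 < k)%N /\ forall A : set nat, dbar A = 0%E -> dbar (fimage f A) = 0%E.

(* shadow f_{pi, a} : (y_1..y_{k-l}) |-> f_pi(a_1..a_l, y_1..y_{k-l}),
   where f_pi(x_1..x_k) = f(x_{pi(1)},..,x_{pi(k)}) *)
Definition shadow (k l : nat) (f : ('I_k -> nat) -> nat) (pi : 'S_k)
  (a : 'I_l -> nat) : ('I_(k - l) -> nat) -> nat :=
  fun y => f (fun i : 'I_k =>
    nth 0%N ([seq a j | j <- enum 'I_l] ++ [seq y j | j <- enum 'I_(k - l)])
        (nat_of_ord (pi i))).

Definition minimal (k : nat) (f : ('I_k -> nat) -> nat) : Prop :=
  ~ inC f /\
  forall (l : nat) (pi : 'S_k) (a : 'I_l -> nat),
    (0 < l)%N -> (l < k)%N -> inC (shadow f pi a).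

Definition bad (k : nat) (f : ('I_k -> nat) -> nat) : Prop :=
  exists eps : rat, 0 < eps /\
    forall i : nat, exists (n t : nat) (A : set nat),
      (i <= n)%N /\ (i <= t)%N /\
      (forall x, A x -> (i <= x)%N /\ (x < n)%N) /\
      (forall r : nat, (cnt A r)%:Q <= r%:Q / ((2 ^ i)%N)%:Q) /\
      eps * t%:Q <= (cnt (fimage f (A)) t)%:Q.

(* Main.v *)
Require Import Defs.
From HB Require Import structures.
From mathcomp Require Import all_boot all_order all_algebra all_fingroup.
From mathcomp Require Import all_classical all_reals all_analysis.
From mathcomp Require Import Rstruct.
From mathcomp Require Import zify.
Set Implicit Arguments. Unset Strict Implicit. Unset Printing Implicit Defensive.
Import Order.TTheory GRing.Theory Num.Theory.

Lemma cnt0 A : cnt A 0 = 0%N.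
Proof. by rewrite /cnt big_geq. Qed.

Lemma cntS A n : cnt A n.+1 = (cnt A n + (n \in A))%N.
Proof. by rewrite /cnt big_nat_recr. Qed.

Lemma cnt_un (A B C : set nat) n :
  (forall y, (y < n)%N -> A y -> B y \/ C y) -> (cnt A n <= cnt B n + cnt C n)%N.
Proof.
elim: n => [|n IH] H; first by rewrite !cnt0.
rewrite !cntS.
have IH' := IH (fun y hy => H y (ltnW hy)).
case: (boolP (n \in A)) => hA; last by lia.
have [hB|hC] := H n (ltnSn n) (set_mem hA).
  by rewrite (mem_set hB); lia.
by rewrite (mem_set hC); lia.
Qed.

Lemma cnt_set0 n : cnt set0 n = 0%N.
Proof. elim: n => [|n IH]; first by rewrite cnt0. by rewrite cntS IH in_set0. Qed.

Lemma cnt_mono (A B : set nat) n :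
  (forall y, (y < n)%N -> A y -> B y) -> (cnt A n <= cnt B n)%N.
Proof.
move=> H; have := @cnt_un A B set0 n (fun y hy ha => or_introl (H y hy ha)).
by rewrite cnt_set0 addn0.
Qed.

Lemma cnt_le A n : (cnt A n <= n)%N.
Proof. elim: n => [|n IH]; first by rewrite cnt0. rewrite cntS; case: (n \in A); lia. Qed.

Lemma cnt_single (A : set nat) v n : (forall y, A y -> y = v) -> (cnt A n <= 1)%N.
Proof.
move=> H; suff h: (cnt A n <= (v < n))%N.
  by apply: leq_trans h _; case: (v < n).
elim: n => [|n IH]; first by rewrite cnt0. rewrite cntS.
case: (boolP (n \in A)) => hA.
  have e := H n (set_mem hA); subst v.
  by rewrite ltnn in IH; move: IH; rewrite leqn0 => /eqP ->; rewrite ltnSn.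
rewrite addn0 (leq_trans IH) //.
by case: (ltnP v n) => h //; rewrite ltnS (ltnW h).
Qed.

Definition dz (X : set nat) := forall q, (0 < q)%N ->
  exists N, forall n, (N <= n)%N -> (q * cnt X n <= n)%N.

Lemma dz_sub (X Y : set nat) : (forall y, X y -> Y y) -> dz Y -> dz X.
Proof.
move=> H dY q q0; have [N HN] := dY q q0; exists N => n hn.
apply: leq_trans (HN n hn); rewrite leq_mul2l; apply/orP; right.
by apply: cnt_mono => y _; apply: H.
Qed.

Lemma dz_union (X Y : set nat) : dz X -> dz Y -> dz (fun y => X y \/ Y y).
Proof.
move=> dX dY q q0.
have [N1 H1] := dX (2 * q)%N ltac:(lia). have [N2 H2] := dY (2 * q)%N ltac:(lia).
exists (maxn N1 N2) => n hn.
have h1 := H1 n ltac:(lia). have h2 := H2 n ltac:(lia).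
have := @cnt_un (fun y => X y \/ Y y) X Y n (fun y _ h => h).
nia.
Qed.

Lemma dz_single (X : set nat) v : (forall y, X y -> y = v) -> dz X.
Proof.
move=> H q q0; exists q => n hn.
have := cnt_single n H; nia.
Qed.

Lemma dz_bigU m (T : nat -> set nat) : (forall c, (c < m)%N -> dz (T c)) ->
  dz (fun y => exists c, (c < m)%N /\ T c y).
Proof.
elim: m => [|m IH] H.
  by apply: (@dz_single _ 0) => y [c [hc _]].
apply: (@dz_sub _ (fun y => (exists c, (c < m)%N /\ T c y) \/ T m y)).
  move=> y [c [hc hT]]; case: (ltngtP c m) => hcm.
  - by left; exists c.
  - lia.
  - by right; rewrite -hcm.
apply: dz_union; last by apply: H.
by apply: IH => c hc; apply: H; lia.
Qed.

Local Notation u X := (fun n => (((cnt X n)%:R / n%:R : Rdefinitions.R)%:E)).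

Lemma dbarE X : dbar X = ereal_inf (range (esups (u X))).
Proof. by rewrite /dbar limn_esup_lim; apply: cvg_lim => //; apply: cvg_esups_inf. Qed.

Lemma dbar0_dz X : dbar X = 0%E -> dz X.
Proof.
rewrite dbarE => e q q0.
have : (ereal_inf (range (esups (u X))) < ((q%:R)^-1 : Rdefinitions.R)%:E)%E.
  by rewrite e lte_fin invr_gt0 ltr0n.
move=> /ereal_inf_lt [_ [N _ <-] hN]; exists N => n hn.
have : (u X n <= esups (u X) N)%E.
  by apply: ereal_sup_ubound; exists n.
move=> /le_lt_trans /(_ hN); rewrite lte_fin.
case: n hn => [|n] hn; first by rewrite cnt0 muln0.
rewrite ltr_pdivrMr ?ltr0n // ltr_pdivlMl ?ltr0n // -natrM ltr_nat; exact: ltnW.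
Qed.

Lemma dbar_pos X : dbar X <> 0%E -> exists p, (0 < p)%N /\
  forall N, exists m, (N <= m)%N /\ (m <= p * cnt X m)%N.
Proof.
move=> hX.
have ge0 : (0 <= dbar X)%E.
  rewrite dbarE; apply: le_ereal_inf_tmp => _ [n _ <-].
  have h : (u X n <= esups (u X) n)%E.
    by apply: ereal_sup_ubound; exists n => /=.
  by apply: le_trans h; rewrite lee_fin divr_ge0.
have gt0 : (0 < dbar X)%E by rewrite lt_neqAle ge0 andbT eq_sym; apply/eqP.
have [p [p0 hp]] : exists p, (0 < p)%N /\ (((p%:R)^-1 : Rdefinitions.R)%:E < dbar X)%E.
  move: gt0; destruct (dbar X) as [r| |] => //.
  - rewrite lte_fin => r0; exists (Num.truncn r^-1).+1; split => //.
    rewrite lte_fin -ltf_pV2 ?posrE ?invr_gt0 ?ltr0n // invrK; exact: truncnS_gt.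
  - by move=> _; exists 1%N; split => //; rewrite ltry.
exists p; split => // N.
move: hp; rewrite dbarE => hp.
have : (((p%:R)^-1 : Rdefinitions.R)%:E < esups (u X) N)%E.
  by apply: (lt_le_trans hp); apply: ereal_inf_lbound; exists N.
move=> /ereal_sup_gt [_ [m hm <-]]; rewrite lte_fin => h.
exists m; split => //.
case: m hm h => [|m] hm h.
  by rewrite cnt0 mul0r ltNge invr_ge0 ler0n in h.
rewrite ltr_pdivlMr ?ltr0n // in h.
rewrite ltr_pdivrMl ?ltr0n // in h.
by rewrite -natrM ltr_nat in h; apply: ltnW.
Qed.

Lemma trunc_img k (f : ('I_k -> nat) -> nat) (B : set nat) t :
  exists n, forall y, (y < t)%N -> fimage f B y ->
    fimage f (fun x => B x /\ (x < n)%N) y.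
Proof.
elim: t => [|t [n IH]]; first by exists 0%N.
case: (pselect (fimage f B t)) => [[x [hx ex]]|hn].
- exists (maxn n (\max_(j < k) x j).+1) => y hy hyB.
  have [hyt|->] : (y < t)%N \/ y = t by lia.
  + have [x' [hx' e]] := IH y hyt hyB; exists x'; split => // j.
    by have [? ?] := hx' j; split => //; lia.
  + exists x; split => // j; split => //.
    have := @leq_bigmax _ (fun j => x j) j; rewrite /=; lia.
- exists n => y hy hyB.
  have [hyt|e] : (y < t)%N \/ y = t by lia.
    exact: IH.
  by subst y.
Qed.

Lemma nth_map_enum K (g : 'I_K -> nat) s (h : (s < K)%N) :
  nth 0%N [seq g m | m <- enum 'I_K] s = g (Ordinal h).
Proof.
rewrite (nth_map (Ordinal h)) ?size_enum_ord //; congr g; apply: val_inj.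
by rewrite /= nth_enum_ord.
Qed.

Definition Tset k (f : ('I_k -> nat) -> nat) (A : set nat) (j : 'I_k) (c : nat) : set nat :=
  fun y => exists x, (forall i, A (x i)) /\ x j = c /\ f x = y.

Lemma shadow_cover n (f : ('I_n.+2 -> nat) -> nat) (A : set nat) (j : 'I_n.+2) c y :
  Tset f A j c y -> fimage (shadow f (tperm j ord0) (fun _ : 'I_1 => c)) A y.
Proof.
move=> [x [hA [hj <-]]].
exists (fun m : 'I_(n.+2 - 1) => x (tperm j ord0 (inord m.+1))).
split; first by move=> m; apply: hA.
rewrite /shadow; congr f; apply: funext => i.
rewrite nth_cat size_map size_enum_ord.
case: (ltnP (tperm j ord0 i) 1) => hs.
  have h0 : tperm j ord0 i = ord0 by apply: val_inj => /=; lia.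
  have hij : i = j by apply: (@perm_inj _ (tperm j ord0)); rewrite h0 tpermL.
  by rewrite h0 (nth_map_enum _ (ltn0Sn 0)) hij hj.
have hlt : (tperm j ord0 i - 1 < n.+2 - 1)%N by have := ltn_ord (tperm j ord0 i); lia.
rewrite (nth_map_enum _ hlt) /=.
have -> : inord (tperm j ord0 i - 1).+1 = tperm j ord0 i.
  by apply: val_inj; rewrite /= inordK; lia.
by rewrite tpermK.
Qed.

Lemma main_gen k (f : ('I_k -> nat) -> nat) (A : set nat) :
  dbar A = 0%E -> dbar (fimage f A) <> 0%E ->
  (forall (j : 'I_k) c, dz (Tset f A j c)) -> bad f.
Proof.
move=> HA HF HT.
have dA := dbar0_dz HA; have [p [p0 hp]] := dbar_pos HF.
exists ((((2 * p)%N)%:Q)^-1)%R; split.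
  by rewrite invr_gt0 -pmulrn ltr0n; lia.
move=> i.
have [N1 h1] := dA (2 ^ i)%N (expn_gt0 2 i).
pose M := maxn N1 i.
pose B := fun x => A x /\ (M <= x)%N.
pose S := fun y => exists c, (c < M)%N /\
   (fun y => exists jn, (jn < k)%N /\ (fun y => exists j : 'I_k, val j = jn /\ Tset f A j c y) y) y.
have dS : dz S.
  apply: dz_bigU => c hc; apply: dz_bigU => jn hjn.
  apply: (@dz_sub _ (Tset f A (Ordinal hjn) c)); last exact: HT.
  move=> y [j [hj hy]]; suff -> : Ordinal hjn = j by [].
  by apply: val_inj.
have [N2 h2] := dS (2 * p)%N ltac:(lia).
have [t [ht1 ht2]] := hp (maxn N2 i).
have hcov : (cnt (fimage f A) t <= cnt (fimage f B) t + cnt S t)%N.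
  apply: cnt_un => y _ [x [hx <-]].
  case: (pselect (forall j, (M <= x j)%N)) => hM.
    by left; exists x; split => // j; split.
  right; have [j hj] : exists j, ~ (M <= x j)%N.
    by apply: contrapT => hne; apply: hM => j; apply: contrapT => h; apply: hne; exists j.
  exists (x j); split; first lia.
  exists (val j); split; first exact: ltn_ord.
  by exists j; split => //; exists x.
have hS := h2 t ltac:(lia).
have hG : (t <= 2 * p * cnt (fimage f B) t)%N by nia.
have [n hn] := trunc_img f B t.
pose n' := maxn n i.
pose A' := fun x => B x /\ (x < n')%N.
exists n', t, A'; split; first lia.
split; first lia.
split.
  by move=> x [[_ hx1] hx2]; split => //; lia.
split.
  move=> r; rewrite -!pmulrn ler_pdivlMr ?ltr0n ?expn_gt0 // -natrM ler_nat.
  case: (ltnP r M) => hr.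
    have : (cnt A' r <= cnt set0 r)%N.
      by apply: cnt_mono => y hy [[_ hy2] _]; lia.
    by rewrite cnt_set0 leqn0 => /eqP ->.
  have := h1 r ltac:(lia).
  have : (cnt A' r <= cnt A r)%N by apply: cnt_mono => y _ [[? _] _].
  nia.
have hG' : (cnt (fimage f B) t <= cnt (fimage f A') t)%N.
  apply: cnt_mono => y hy hyB.
  have [x [hx e]] := hn y hy hyB; exists x; split => // j.
  by have [? ?] := hx j; split => //; lia.
rewrite -!pmulrn ler_pdivrMl ?ltr0n; last lia.
rewrite -natrM ler_nat; nia.
Qed.

Lemma Tset_dz k (f : ('I_k -> nat) -> nat) (A : set nat) :
  (1 <= k)%N -> minimal f -> dbar A = 0%E -> forall (j : 'I_k) c, dz (Tset f A j c).
Proof.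
case: k f => [|[|n]] f // _ [_ hmin] HA j c.
  apply: (@dz_single _ (f (fun _ => c))) => y [x [_ [hj <-]]].
  congr f; apply: funext => i; by rewrite (ord1 i) -hj (ord1 j).
apply: (@dz_sub _ (fimage (shadow f (tperm j ord0) (fun _ : 'I_1 => c)) A)).
  by move=> y; apply: shadow_cover.
apply: dbar0_dz.
have [_ h] := hmin 1%N (tperm j ord0) (fun _ => c) isT isT.
exact: h.
Qed.

Theorem mainTheorem5 (k : nat) (f : ('I_k -> nat) -> nat) :
  (1 <= k)%N -> minimal f -> bad f.
Proof.
move=> hk hmin.
have [A [hA hF]] : exists A, dbar A = 0%E /\ dbar (fimage f A) <> 0%E.
  apply: contrapT => hne; apply: hmin.1; split => // A hA.
  apply: contrapT => hF; apply: hne; by exists A.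
exact: (main_gen hA hF (Tset_dz hk hmin hA)).
Qed.
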